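(* Consider the disclosure model described in the context, and suppose $\pi(\theta,e)=\tilde\pi(\theta,e,e)=\pi_0(e)-\theta\,(ae+b)$ for some function $\pi_0$ and constants $a,b\in\mathbb{R}$ with $a>0$ (respectively $a<0$). Suppose $f$ is continuously differentiable on the interior of $\Theta$. Suppose further that there exists $\theta_\blacktriangle\in\Theta$ such that: (i) $\underline{\mathbf e}(\theta)=\bar e$ for all $\theta\in[\underline\theta,\theta_\blacktriangle]$ (respectively for all $\theta\in[\theta_\blacktriangle,\bar\theta]$); and (ii) $f$ is nonincreasing on $[\theta_\blacktriangle,\bar\theta]$ (respectively nondecreasing on $[\underline\theta,\theta_\blacktriangle]$). Then full disclosure is the only efficient policy: the Pareto frontier of $\{(\Gamma(d),\Pi(d)):d\in\mathcal{D}\}$ consists of the single point $(\Gamma(d_F),\Pi(d_F))$, where $d_F$ is a full-disclosure policy.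
   Context: Emissions lie in $E=[0,\bar e]$ with $\bar e>0$. The firm's type $\theta\in\Theta=[\underline\theta,\bar\theta]$ is private information with density $f=F'$, which is continuous on $\Theta$. The firm's profit is $\tilde\pi(\theta,e,\tilde e)$ with actual emission $e$ and market-perceived emission $\tilde e$; it is strictly increasing in $e$ and strictly decreasing in $\tilde e$. Standing assumptions: $\tilde\pi$ is continuous on $\Theta\times E\times E$ and $C^2$ on its interior; $\pi(\theta,e):=\tilde\pi(\theta,e,e)$ is strictly concave in $e$; and $\pi(\theta,0)<\pi(\theta,\bar e)$ for all $\theta$. $\underline{\mathbf e}(\theta):=\min\{e\in E:\pi(\theta,e)\ge\pi(\theta,\bar e)\}$ and $\hat{\mathbf e}(\theta):=\arg\max_{e\in E}\pi(\theta,e)$. A disclosure policy is a function $d:E\to E$ (a partition of $E$ into level sets). An emission $e$ is belief-compatible under $d$ if $e\ge e'$ whenever $d(e')=d(e)$; $\tilde E_d$ is the set of such levels. The type-$\theta$ firm chooses $e\in\tilde E_d$ maximizing $\pi(\theta,e)$. $\mathcal{D}$ is the set of policies for which the maximum is attained for every type. For $d\in\mathcal{D}$, $\pi_d(\theta)=\max_{e\in\tilde E_d}\pi(\theta,e)$, and $\gamma_d(\theta)$ is the lowest maximizer. Further, $\Pi(d)=\int_\Theta\pi_d\,dF$ and $\Gamma(d)=\int_\Theta\gamma_d\,dF$. A policy $d\in\mathcal{D}$ is Pareto efficient if there is no $d'\in\mathcal{D}$ with $\Pi(d')\ge\Pi(d)$ and $\Gamma(d')\le\Gamma(d)$, at least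 one strict. A full-disclosure policy is a policy in which every $e\in\hat{\mathbf e}(\Theta)$ is alone in its cell ($d(e')=d(e)$ implies $e'=e$), so each type can attain $\max_E\pi(\theta,\cdot)$. *)

(* Defs.v *)
From Stdlib Require Import Reals Lra.
From Coquelicot Require Import Coquelicot.
Open Scope R_scope.

Definition inI (lo hi x : R) : Prop := lo <= x <= hi.

Definition pi_diag (pit : R -> R -> R -> R) (th e : R) : R := pit th e e.

Definition part (i : nat) (g : R -> R -> R -> R) : R -> R -> R -> R :=
  match i with
  | O => fun x y z => Derive (fun t => g t y z) x
  | S O => fun x y z => Derive (fun t => g x t z) y
  | _ => fun x y z => Derive (fun t => g x y t) z
  end.

Definition ex_part (i : nat) (g : R -> R -> R -> R) (x y z : R) : Prop :=
  match i with
  | O => ex_derive (fun t => g t y z) x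
  | S O => ex_derive (fun t => g x t z) y
  | _ => ex_derive (fun t => g x y t) z
  end.

Definition cont3_at (U : R -> R -> R -> Prop) (g : R -> R -> R -> R)
  (x y z : R) : Prop :=
  forall eps, 0 < eps -> exists del, 0 < del /\
    forall x' y' z', U x' y' z' ->
      Rabs (x' - x) < del -> Rabs (y' - y) < del -> Rabs (z' - z) < del ->
      Rabs (g x' y' z' - g x y z) < eps.

Definition C2_on (U : R -> R -> R -> Prop) (g : R -> R -> R -> R) : Prop :=
  forall x y z, U x y z ->
    cont3_at U g x y z /\
    (forall i, (i < 3)%nat -> ex_part i g x y z /\ cont3_at U (part i g) x y z) /\
    (forall i j, (i < 3)%nat -> (j < 3)%nat ->
       ex_part j (part i g) x y z /\ cont3_at U (part j (part i g)) x y z).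

(** Standing assumptions of the model on tilde-pi, Theta = [lo,hi], E = [0,ebar] *)
Definition standing_assumptions (lo hi ebar : R) (pit : R -> R -> R -> R) : Prop :=
  (forall th e e', inI lo hi th -> inI 0 ebar e -> inI 0 ebar e' ->
     cont3_at (fun x y z => inI lo hi x /\ inI 0 ebar y /\ inI 0 ebar z)
              pit th e e') /\
  C2_on (fun x y z => lo < x < hi /\ 0 < y < ebar /\ 0 < z < ebar) pit /\
  (* strictly increasing in actual emission e *)
  (forall th e1 e2 e', inI lo hi th -> inI 0 ebar e1 -> inI 0 ebar e2 ->
     inI 0 ebar e' -> e1 < e2 -> pit th e1 e' < pit th e2 e') /\
  (* strictly decreasing in perceived emission *)
  (forall th e e1 e2, inI lo hi th -> inI 0 ebar e -> inI 0 ebar e1 ->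
     inI 0 ebar e2 -> e1 < e2 -> pit th e e2 < pit th e e1) /\
  (forall th x y t, inI lo hi th -> inI 0 ebar x -> inI 0 ebar y -> x <> y ->
     0 < t < 1 ->
     t * pi_diag pit th x + (1 - t) * pi_diag pit th y
       < pi_diag pit th (t * x + (1 - t) * y)) /\
  (forall th, inI lo hi th -> pi_diag pit th 0 < pi_diag pit th ebar).

Definition density (lo hi : R) (f : R -> R) : Prop :=
  (forall th, inI lo hi th -> 0 <= f th) /\
  (forall th, inI lo hi th -> forall eps, 0 < eps -> exists del, 0 < del /\
     forall th', inI lo hi th' -> Rabs (th' - th) < del ->
       Rabs (f th' - f th) < eps) /\
  RInt f lo hi = 1.

Definition is_elow (ebar : R) (pit : R -> R -> R -> R) (th x : R) : Prop :=
  inI 0 ebar x /\ pi_diag pit th x >= pi_diag pit th ebar /\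
  forall e, inI 0 ebar e -> pi_diag pit th e >= pi_diag pit th ebar -> x <= e.

Definition is_ehat (ebar : R) (pit : R -> R -> R -> R) (th e : R) : Prop :=
  inI 0 ebar e /\ forall e', inI 0 ebar e' -> pi_diag pit th e' <= pi_diag pit th e.

(** a disclosure policy d : E -> E (values outside E are irrelevant) *)
Definition policy (ebar : R) (d : R -> R) : Prop :=
  forall e, inI 0 ebar e -> inI 0 ebar (d e).

Definition belief_compatible (ebar : R) (d : R -> R) (e : R) : Prop :=
  inI 0 ebar e /\ forall e', inI 0 ebar e' -> d e' = d e -> e' <= e.

Definition in_D (lo hi ebar : R) (pit : R -> R -> R -> R) (d : R -> R) : Prop :=
  policy ebar d /\
  forall th, inI lo hi th -> exists e, belief_compatible ebar d e /\
    forall e', belief_compatible ebar d e' -> pi_diag pit th e' <= pi_diag pit th e.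

Definition pi_d (ebar : R) (pit : R -> R -> R -> R) (d : R -> R) (th : R) : R :=
  real (Lub_Rbar (fun v => exists e, belief_compatible ebar d e /\
                                       v = pi_diag pit th e)).

Definition gamma_d (ebar : R) (pit : R -> R -> R -> R) (d : R -> R) (th : R) : R :=
  real (Glb_Rbar (fun e => belief_compatible ebar d e /\
                             pi_diag pit th e = pi_d ebar pit d th)).

Definition Pi (lo hi ebar : R) (pit : R -> R -> R -> R) (f : R -> R) (d : R -> R) : R :=
  RInt (fun th => pi_d ebar pit d th * f th) lo hi.

Definition Gamma (lo hi ebar : R) (pit : R -> R -> R -> R) (f : R -> R) (d : R -> R) : R :=
  RInt (fun th => gamma_d ebar pit d th * f th) lo hi.

Definition pareto_efficient (lo hi ebar : R) (pit : R -> R -> R -> R) (f : R -> R)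
  (d : R -> R) : Prop :=
  in_D lo hi ebar pit d /\
  ~ (exists d', in_D lo hi ebar pit d' /\
       Pi lo hi ebar pit f d' >= Pi lo hi ebar pit f d /\
       Gamma lo hi ebar pit f d' <= Gamma lo hi ebar pit f d /\
       (Pi lo hi ebar pit f d' > Pi lo hi ebar pit f d \/
        Gamma lo hi ebar pit f d' < Gamma lo hi ebar pit f d)).

Definition full_disclosure (lo hi ebar : R) (pit : R -> R -> R -> R) (d : R -> R) : Prop :=
  policy ebar d /\
  forall th e, inI lo hi th -> is_ehat ebar pit th e ->
    forall e', inI 0 ebar e' -> d e' = d e -> e' = e.

(* Main.v *)
Require Import Defs.
From Stdlib Require Import Reals.
From Coquelicot Require Import Coquelicot.
From Stdlib Require Import Lra Lia Classical.
Open Scope R_scope.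

Lemma part_lemma (s t K : R) (X m : R -> R) :
  s <= t -> 0 <= K ->
  (forall u w, s <= u -> u <= w -> w <= t -> m w <= m u) ->
  (forall u w, s <= u -> u <= w -> w <= t -> X u - K * (w - u) * (m u - m w) <= X w) ->
  X s <= X t.
Proof.
  intros Hst HK Hm HX.
  assert (Hn : forall n : nat, X s - K * ((t - s) / (INR n + 1)) * (m s - m t) <= X t).
  { intros n.
    set (d := (t - s) / (INR n + 1)).
    assert (Hpos : 0 < INR n + 1) by (pose proof (pos_INR n); lra).
    assert (Hd : 0 <= d) by (unfold d; apply Rdiv_le_0_compat; lra).
    assert (Hx : forall k, (k <= S n)%nat -> s <= s + INR k * d <= t).
    { intros k Hk. split.
      - pose proof (pos_INR k). nra.
      - assert (INR k <= INR n + 1) by (rewrite <- S_INR; apply le_INR; lia).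
        assert (INR k * d <= (INR n + 1) * d) by nra.
        unfold d in *. replace ((INR n + 1) * ((t - s) / (INR n + 1))) with (t - s) in H0 by (field; lra). lra. }
    assert (Hk : forall k, (k <= S n)%nat ->
       X s - K * d * (m s - m (s + INR k * d)) <= X (s + INR k * d)).
    { induction k as [|k IH]; intros Hk.
      - simpl. replace (s + 0 * d) with s by ring. lra.
      - assert (Hk' : (k <= S n)%nat) by lia.
        specialize (IH Hk').
        destruct (Hx k Hk') as [A1 A2]. destruct (Hx (S k) Hk) as [B1 B2].
        rewrite S_INR in *.
        assert (E : s + (INR k + 1) * d = (s + INR k * d) + d) by ring.
        rewrite E in *.
        pose proof (HX (s + INR k * d) (s + INR k * d + d) A1 ltac:(lra) B2) as H1.
        replace (s + INR k * d + d - (s + INR k * d)) with d in H1 by ring.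
        lra. }
    specialize (Hk (S n) (le_n _)).
    replace (s + INR (S n) * d) with t in Hk. exact Hk.
    unfold d. rewrite S_INR. field. lra. }
  destruct (Rle_or_lt (X s) (X t)) as [H|H]; [exact H|].
  exfalso.
  assert (Hmst : m t <= m s) by (apply Hm; lra).
  set (C := K * (t - s) * (m s - m t)).
  assert (HC : 0 <= C) by (unfold C; apply Rmult_le_pos; [apply Rmult_le_pos|]; lra).
  destruct (nfloor_ex (C / (X s - X t))) as [n [_ Hn2]].
  { apply Rdiv_le_0_compat; lra. }
  specialize (Hn n).
  assert (Hpos : 0 < INR n + 1) by (pose proof (pos_INR n); lra).
  replace (K * ((t - s) / (INR n + 1)) * (m s - m t)) with (C / (INR n + 1)) in Hn
    by (unfold C; field; lra).
  assert (C < (X s - X t) * (INR n + 1)).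
  { apply Rmult_lt_compat_r with (r := X s - X t) in Hn2; [|lra].
    unfold Rdiv in Hn2. rewrite Rmult_assoc, Rinv_l in Hn2 by lra. lra. }
  assert (C / (INR n + 1) < X s - X t).
  { apply Rmult_lt_reg_r with (INR n + 1); [lra|].
    unfold Rdiv. rewrite Rmult_assoc, Rinv_l by lra. lra. }
  lra.
Qed.

Lemma RInt_minusR (f g : R -> R) a b : ex_RInt f a b -> ex_RInt g a b ->
  RInt (fun x => f x - g x) a b = RInt f a b - RInt g a b.
Proof. intros. exact (RInt_minus f g a b H H0). Qed.
Lemma RInt_plusR (f g : R -> R) a b : ex_RInt f a b -> ex_RInt g a b ->
  RInt (fun x => f x + g x) a b = RInt f a b + RInt g a b.
Proof. intros. exact (RInt_plus f g a b H H0). Qed.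
Lemma RInt_scalR (f : R -> R) a b k : ex_RInt f a b ->
  RInt (fun x => k * f x) a b = k * RInt f a b.
Proof. intros. exact (RInt_scal f a b k H). Qed.
Lemma ex_RInt_minusR (f g : R -> R) a b : ex_RInt f a b -> ex_RInt g a b ->
  ex_RInt (fun x => f x - g x) a b.
Proof. intros. exact (ex_RInt_minus f g a b H H0). Qed.
Lemma ex_RInt_plusR (f g : R -> R) a b : ex_RInt f a b -> ex_RInt g a b ->
  ex_RInt (fun x => f x + g x) a b.
Proof. intros. exact (ex_RInt_plus f g a b H H0). Qed.
Lemma ex_RInt_scalR (f : R -> R) a b k : ex_RInt f a b ->
  ex_RInt (fun x => k * f x) a b.
Proof. intros. exact (ex_RInt_scal f a b k H). Qed.
Lemma RInt_constR a b (c : R) : RInt (fun _ => c) a b = (b - a) * c.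
Proof. exact (@RInt_const R_CompleteNormedModule a b c). Qed.
Lemma ex_RInt_constR a b (c : R) : ex_RInt (fun _ : R => c) a b.
Proof. exact (@ex_RInt_const R_NormedModule a b c). Qed.

Lemma ri_bounds (g : R -> R) u w lb ub : u <= w -> ex_RInt g u w ->
  (forall x, u < x < w -> lb <= g x <= ub) ->
  (w - u) * lb <= RInt g u w <= (w - u) * ub.
Proof.
  intros Huw Hex Hb. split.
  - rewrite <- RInt_constR. apply RInt_le; auto. apply ex_RInt_constR.
    intros x Hx; apply Hb; auto.
  - rewrite <- RInt_constR. apply RInt_le; auto. apply ex_RInt_constR.
    intros x Hx; apply Hb; auto.
Qed.

Lemma ex_sub (g : R -> R) s t u w : s <= u -> u <= w -> w <= t -> ex_RInt g s t -> ex_RInt g u w.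
Proof.
  intros H1 H2 H3 H. apply (@ex_RInt_Chasles_2 R_CompleteNormedModule g s u w). lra.
  apply (@ex_RInt_Chasles_1 R_CompleteNormedModule g s w t). lra. exact H.
Qed.

Lemma RInt_ChaslesR (f : R -> R) a b c : ex_RInt f a b -> ex_RInt f b c ->
  RInt f a b + RInt f b c = RInt f a c.
Proof. intros. exact (RInt_Chasles f a b c H H0). Qed.

Lemma RInt_pointR (f : R -> R) a : RInt f a a = 0.
Proof. exact (@RInt_point R_CompleteNormedModule a f). Qed.

Lemma envelope (s t a b : R) (g V : R -> R) :
  s <= t -> 0 < a ->
  (forall u w, s <= u -> u <= w -> w <= t -> g w <= g u) ->
  ex_RInt g s t ->
  (forall u w, s <= u -> u <= w -> w <= t ->
     - (w - u) * (a * g u + b) <= V w - V u <= - (w - u) * (a * g w + b)) ->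
  a * RInt g s t = V s - V t - b * (t - s).
Proof.
  intros Hst Ha Hg Hex HV.
  set (H := fun c => a * RInt g s c + V c + b * (c - s)).
  assert (Step : forall u w, s <= u -> u <= w -> w <= t ->
     Rabs (H w - H u) <= a * (w - u) * (g u - g w)).
  { intros u w H1 H2 H3.
    assert (E : RInt g s w = RInt g s u + RInt g u w).
    { symmetry. apply RInt_ChaslesR; apply ex_sub with s t; lra || auto. }
    pose proof (ri_bounds g u w (g w) (g u) H2 ltac:(apply ex_sub with s t; lra || auto))
      as [B1 B2].
    { intros x Hx. split; apply Hg; lra. }
    destruct (HV u w H1 H2 H3) as [C1 C2].
    unfold H. rewrite E. apply Rabs_le. split; nra. }
  assert (A1 : H s <= H t).
  { apply (part_lemma s t a H g); try lra; auto.
    intros u w H1 H2 H3. specialize (Step u w H1 H2 H3). apply Rabs_le_between in Step. lra. }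
  assert (A2 : (fun c => - H c) s <= (fun c => - H c) t).
  { apply (part_lemma s t a (fun c => - H c) g); try lra; auto.
    intros u w H1 H2 H3. specialize (Step u w H1 H2 H3). apply Rabs_le_between in Step. lra. }
  simpl in A2. unfold H in A1, A2. rewrite RInt_pointR in A1, A2. lra.
Qed.

Lemma abel (s t B : R) (phi f : R -> R) :
  s <= t -> 0 <= B ->
  ex_RInt phi s t -> ex_RInt (fun x => phi x * f x) s t ->
  (forall x, s <= x <= t -> Rabs (phi x) <= B) ->
  (forall u w, s <= u -> u <= w -> w <= t -> f w <= f u) ->
  (forall x, s <= x <= t -> 0 <= f x) ->
  (forall c, s <= c <= t -> 0 <= RInt phi s c) ->
  0 <= RInt (fun x => phi x * f x) s t.
Proof.
  intros Hst HB Hp Hpf Hb Hf Hf0 HPhi.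
  set (X := fun c => RInt (fun x => phi x * f x) s c - f c * RInt phi s c).
  assert (A : X s <= X t).
  { apply (part_lemma s t B X f); auto.
    intros u w H1 H2 H3.
    assert (Eu1 : ex_RInt phi s u) by (apply ex_sub with s t; lra || auto).
    assert (Eu2 : ex_RInt phi u w) by (apply ex_sub with s t; lra || auto).
    assert (Ev1 : ex_RInt (fun x => phi x * f x) s u) by (apply ex_sub with s t; lra || auto).
    assert (Ev2 : ex_RInt (fun x => phi x * f x) u w) by (apply ex_sub with s t; lra || auto).
    assert (E1 : RInt phi s w = RInt phi s u + RInt phi u w) by (symmetry; apply RInt_ChaslesR; auto).
    assert (E2 : RInt (fun x => phi x * f x) s w = RInt (fun x => phi x * f x) s u + RInt (fun x => phi x * f x) u w)
      by (symmetry; apply RInt_ChaslesR; auto).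
    assert (E3 : RInt (fun x => phi x * f x - f w * phi x) u w =
                 RInt (fun x => phi x * f x) u w - f w * RInt phi u w).
    { rewrite RInt_minusR; auto. rewrite RInt_scalR; auto. apply ex_RInt_scalR; auto. }
    assert (Bd : (w - u) * (- (B * (f u - f w))) <= RInt (fun x => phi x * f x - f w * phi x) u w).
    { apply ri_bounds with (ub := B * (f u - f w)); auto.
      apply ex_RInt_minusR; auto. apply ex_RInt_scalR; auto.
      intros x Hx.
      assert (F1 : f w <= f x) by (apply Hf; lra).
      assert (F2 : f x <= f u) by (apply Hf; lra).
      assert (P : Rabs (phi x) <= B) by (apply Hb; lra).
      replace (phi x * f x - f w * phi x) with (phi x * (f x - f w)) by ring.
      assert (Q : Rabs (phi x * (f x - f w)) <= B * (f u - f w)).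
      { rewrite Rabs_mult. rewrite (Rabs_right (f x - f w)) by lra.
        apply Rle_trans with (B * (f x - f w)). apply Rmult_le_compat_r; lra.
        apply Rmult_le_compat_l; lra. }
      apply Rabs_le_between in Q. lra. }
    assert (Pu : 0 <= RInt phi s u) by (apply HPhi; lra).
    assert (Fuw : f w <= f u) by (apply Hf; lra).
    assert (PP : 0 <= RInt phi s u * (f u - f w)) by (apply Rmult_le_pos; lra).
    unfold X. rewrite E1, E2. nra. }
  unfold X in A. rewrite !RInt_pointR in A.
  assert (0 <= f t * RInt phi s t). { apply Rmult_le_pos. apply Hf0; lra. apply HPhi; lra. }
  lra.
Qed.

Lemma ex_RInt_contR (f : R -> R) a b : (forall z, continuous f z) -> ex_RInt f a b.
Proof. intros H. exact (@ex_RInt_continuous R_CompleteNormedModule f a b (fun z _ => H z)). Qed.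

Definition clamp (lo hi x : R) : R := Rmax lo (Rmin hi x).

Lemma clamp_in lo hi x : lo <= hi -> lo <= clamp lo hi x <= hi.
Proof. intros H; unfold clamp, Rmax, Rmin; repeat destruct Rle_dec; lra. Qed.
Lemma clamp_id lo hi x : lo <= x <= hi -> clamp lo hi x = x.
Proof. intros H; unfold clamp, Rmax, Rmin; repeat destruct Rle_dec; lra. Qed.
Lemma clamp_lip lo hi x y : lo <= hi -> Rabs (clamp lo hi x - clamp lo hi y) <= Rabs (x - y).
Proof. intros H; unfold clamp, Rmax, Rmin; repeat destruct Rle_dec; split_Rabs; lra. Qed.
Lemma clamp_mono lo hi x y : lo <= hi -> x <= y -> clamp lo hi x <= clamp lo hi y.
Proof. intros H H'; unfold clamp, Rmax, Rmin; repeat destruct Rle_dec; lra. Qed.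

Definition rel_cont (F : R -> R) (lo hi : R) : Prop :=
  forall x, lo <= x <= hi -> forall eps, 0 < eps -> exists del, 0 < del /\
    forall y, lo <= y <= hi -> Rabs (y - x) < del -> Rabs (F y - F x) < eps.

Lemma cont_clamp (F : R -> R) lo hi : lo <= hi -> rel_cont F lo hi ->
  forall z, continuous (fun x => F (clamp lo hi x)) z.
Proof.
  intros Hlh HF z. apply continuity_pt_filterlim.
  unfold continuity_pt, continue_in, limit1_in, limit_in. intros eps Heps.
  destruct (HF (clamp lo hi z) (clamp_in lo hi z Hlh) eps Heps) as [d [Hd Hdd]].
  exists d. split; [lra|]. intros x [_ Hx]. simpl in *. unfold R_dist in *.
  apply Hdd. apply clamp_in; auto.
  eapply Rle_lt_trans. apply clamp_lip; auto. exact Hx.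
Qed.

Lemma ext_open (f g : R -> R) lo hi : lo <= hi ->
  (forall x, lo < x < hi -> f x = g x) -> ex_RInt f lo hi -> ex_RInt g lo hi.
Proof.
  intros H E. apply ex_RInt_ext. rewrite Rmin_left, Rmax_right by lra. exact E.
Qed.

Lemma ind_int (lo hi c eps : R) (g F : R -> R) : lo <= hi ->
  (forall x y, x <= y -> g y <= g x) -> (forall z, continuous F z) ->
  ex_RInt (fun x => (if Rle_dec c (g x) then eps else 0) * F x) lo hi.
Proof.
  intros Hlh Hg HF.
  destruct (classic (exists x, lo <= x <= hi /\ c <= g x)) as [Hne|Hem].
  - set (E := fun x => lo <= x <= hi /\ c <= g x).
    assert (Hb : bound E) by (exists hi; intros x [Hx _]; lra).
    destruct (completeness E Hb Hne) as [sg [Hub Hlub]].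
    destruct Hne as [x0 Hx0].
    assert (S1 : lo <= sg) by (apply Rle_trans with x0; [lra| apply Hub; exact Hx0]).
    assert (S2 : sg <= hi) by (apply Hlub; intros x [Hx _]; lra).
    apply (@ex_RInt_Chasles R_NormedModule) with sg.
    + apply ext_open with (fun x => eps * F x); auto.
      * intros x Hx. destruct (Rle_dec c (g x)) as [H|H]; auto.
        exfalso. destruct (classic (exists y, E y /\ x < y)) as [[y [[Hy1 Hy2] Hy3]]|Hn].
        { apply H. apply Rle_trans with (g y); auto. apply Hg; lra. }
        assert (sg <= x). { apply Hlub. intros y Ey. destruct (Rle_or_lt y x); auto.
          exfalso; apply Hn; exists y; auto. }
        lra.
      * apply ex_RInt_scalR. apply ex_RInt_contR. auto.
    + apply ext_open with (fun _ => 0); auto.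
      * intros x Hx. destruct (Rle_dec c (g x)) as [H|H]; [|ring].
        exfalso. assert (x <= sg) by (apply Hub; split; [lra|auto]). lra.
      * apply ex_RInt_constR.
  - apply ext_open with (fun _ => 0); auto.
    + intros x Hx. destruct (Rle_dec c (g x)) as [H|H]; [|ring].
      exfalso. apply Hem. exists x. split; [lra|auto].
    + apply ex_RInt_constR.
Qed.

Fixpoint lvl (g : R -> R) (m e : R) (N : nat) (x : R) : R :=
  match N with
  | O => 0
  | S n => lvl g m e n x + (if Rle_dec (m + INR (S n) * e) (g x) then e else 0)
  end.

Lemma lvl_inv g m e x : 0 < e -> m <= g x -> forall N,
  (m + INR N * e <= g x /\ lvl g m e N x = INR N * e) \/
  (g x < m + INR N * e /\ m + lvl g m e N x <= g x < m + lvl g m e N x + e).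
Proof.
  intros He Hm N. induction N as [|N IH].
  - left. simpl. lra.
  - change (lvl g m e (S N) x) with (lvl g m e N x + (if Rle_dec (m + INR (S N) * e) (g x) then e else 0)).
    rewrite S_INR. destruct IH as [[A1 A2]|[A1 A2]].
    + destruct (Rle_dec (m + (INR N + 1) * e) (g x)) as [H|H].
      * left. split; [lra|]. rewrite A2; ring.
      * right. rewrite A2. split; lra.
    + destruct (Rle_dec (m + (INR N + 1) * e) (g x)) as [H|H].
      * exfalso. lra.
      * right. split; lra.
Qed.

Lemma lvl_approx g m M e x N : 0 < e -> m <= g x <= M -> M - m < INR N * e ->
  Rabs (g x - (m + lvl g m e N x)) < e.
Proof.
  intros He Hx HN. destruct (lvl_inv g m e x He (proj1 Hx) N) as [[A1 A2]|[A1 A2]].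
  - lra.
  - apply Rabs_def1; lra.
Qed.

Lemma lvl_int (lo hi m e : R) (g F : R -> R) : lo <= hi ->
  (forall x y, x <= y -> g y <= g x) -> (forall z, continuous F z) ->
  forall N, ex_RInt (fun x => lvl g m e N x * F x) lo hi.
Proof.
  intros Hlh Hg HF N. induction N as [|N IH].
  - simpl. apply ext_open with (fun _ => 0); auto. intros; ring. apply ex_RInt_constR.
  - change (fun x => lvl g m e (S N) x * F x) with (fun x => (lvl g m e N x + (if Rle_dec (m + INR (S N) * e) (g x) then e else 0)) * F x).
    apply ext_open with
      (fun x => lvl g m e N x * F x + (if Rle_dec (m + INR (S N) * e) (g x) then e else 0) * F x); auto.
    intros; ring.
    apply ex_RInt_plusR; auto. apply ind_int; auto.
Qed.

Lemma mono_int (lo hi m M B : R) (g F : R -> R) : lo <= hi ->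
  (forall x y, x <= y -> g y <= g x) -> (forall x, m <= g x <= M) ->
  (forall z, continuous F z) -> (forall x, Rabs (F x) <= B) ->
  ex_RInt (fun x => g x * F x) lo hi.
Proof.
  intros Hlh Hg Hm HF HB.
  assert (HB0 : 0 <= B) by (eapply Rle_trans; [apply Rabs_pos|apply (HB 0)]).
  assert (HmM : m <= M) by (destruct (Hm 0); lra).
  set (e := fun n : nat => (M - m + 1) / (INR n + 1)).
  assert (He : forall n, 0 < e n).
  { intros n. unfold e. apply Rdiv_lt_0_compat; [lra|]. pose proof (pos_INR n); lra. }
  set (h := fun (n : nat) x => (m + lvl g m (e n) (S n) x) * F x).
  assert (Hh : forall n, is_RInt (h n) lo hi (RInt (h n) lo hi)).
  { intros n. apply (@RInt_correct R_CompleteNormedModule).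
    apply ext_open with (fun x => m * F x + lvl g m (e n) (S n) x * F x); auto.
    intros; unfold h; ring.
    apply ex_RInt_plusR. apply ex_RInt_scalR, ex_RInt_contR; auto.
    apply lvl_int; auto. }
  assert (Hlim : filterlim h eventually (@locally (fct_UniformSpace R R_UniformSpace) (fun x => g x * F x))).
  { intros P [eps Heps].
    destruct (nfloor_ex ((M - m + 1) * (B + 1) / eps)) as [N0 [_ HN0]].
    { apply Rdiv_le_0_compat; [|apply cond_pos]. apply Rmult_le_pos; lra. }
    exists N0. intros n Hn. apply Heps. intros t. unfold ball; simpl; unfold AbsRing_ball; simpl.
    unfold h. 
    assert (Hn' : INR N0 <= INR n) by (apply le_INR; lia).
    assert (Hpos : 0 < INR n + 1) by (pose proof (pos_INR n); lra).
    assert (A : Rabs (g t - (m + lvl g m (e n) (S n) t)) < e n).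
    { apply lvl_approx with M; auto. rewrite S_INR. unfold e. 
      replace ((INR n + 1) * ((M - m + 1) / (INR n + 1))) with (M - m + 1) by (field; lra). lra. }
    set (L := lvl g m (e n) (S n) t) in *.
    unfold abs, minus, plus, opp; simpl.
    replace ((m + L) * F t + - (g t * F t))
      with (- ((g t - (m + L)) * F t)) by ring.
    rewrite Rabs_Ropp, Rabs_mult.
    apply Rle_lt_trans with (e n * (B + 1)).
    { apply Rmult_le_compat; try apply Rabs_pos; try lra. specialize (HB t); lra. }
    unfold e. 
    assert (E1 : (M - m + 1) * (B + 1) < eps * (INR n + 1)).
    { assert ((M - m + 1) * (B + 1) / eps < INR n + 1) by lra.
      pose proof (cond_pos eps).
      apply Rmult_lt_compat_r with (r := eps) in H; auto.
      unfold Rdiv in H. rewrite Rmult_assoc, Rinv_l in H by lra. lra. }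
    apply Rmult_lt_reg_r with (INR n + 1); auto.
    replace ((M - m + 1) / (INR n + 1) * (B + 1) * (INR n + 1)) with ((M - m + 1) * (B + 1)) by (field; lra).
    lra. }
  destruct (filterlim_RInt h lo hi eventually _ (fun x => g x * F x) (fun n => RInt (h n) lo hi) Hh Hlim)
    as [If [_ HI]].
  exists If. exact HI.
Qed.

Lemma bc_range ebar d e : belief_compatible ebar d e -> 0 <= e <= ebar.
Proof. intros [H _]; exact H. Qed.

Lemma bc_top ebar d : 0 <= ebar -> belief_compatible ebar d ebar.
Proof. intros H. split. split; lra. intros e' [_ He'] _. exact He'. Qed.

Lemma pi_d_max ebar pit d th e :
  belief_compatible ebar d e ->
  (forall e', belief_compatible ebar d e' -> pi_diag pit th e' <= pi_diag pit th e) ->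
  pi_d ebar pit d th = pi_diag pit th e.
Proof.
  intros Hb Hm. unfold pi_d.
  rewrite (is_lub_Rbar_unique _ (Finite (pi_diag pit th e))). reflexivity.
  split.
  - intros x [e' [He' ->]]. simpl. apply Hm; auto.
  - intros u Hu. apply Hu. exists e; auto.
Qed.

Lemma V_props lo hi ebar pit d th : in_D lo hi ebar pit d -> inI lo hi th ->
  (forall e, belief_compatible ebar d e -> pi_diag pit th e <= pi_d ebar pit d th) /\
  (exists e, belief_compatible ebar d e /\ pi_diag pit th e = pi_d ebar pit d th).
Proof.
  intros [_ HD] Hth. destruct (HD th Hth) as [e [Hb Hm]].
  rewrite (pi_d_max ebar pit d th e Hb Hm). split; eauto.
Qed.

Lemma g_props lo hi ebar pit d th : in_D lo hi ebar pit d -> inI lo hi th ->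
  let M := fun e => belief_compatible ebar d e /\ pi_diag pit th e = pi_d ebar pit d th in
  (forall e, M e -> gamma_d ebar pit d th <= e) /\
  (forall y, (forall e, M e -> y <= e) -> y <= gamma_d ebar pit d th) /\
  0 <= gamma_d ebar pit d th <= ebar.
Proof.
  intros HD Hth M.
  destruct (V_props lo hi ebar pit d th HD Hth) as [_ [e0 [Hb0 He0]]].
  assert (HM0 : M e0) by (split; auto).
  pose proof (Glb_Rbar_correct M) as [Hlb Hgr].
  unfold gamma_d. fold M.
  destruct (Glb_Rbar M) as [r| |] eqn:EG.
  - simpl. assert (Hlow : forall e, M e -> r <= e) by (intros e He; exact (Hlb e He)).
    assert (Hgr' : forall y, (forall e, M e -> y <= e) -> y <= r).
    { intros y Hy. exact (Hgr (Finite y) Hy). }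
    split; [exact Hlow|]. split; [exact Hgr'|].
    split.
    + apply Hgr'. intros e [He _]. apply (bc_range ebar d e He).
    + apply Rle_trans with e0. apply Hlow; auto. apply (bc_range ebar d e0 Hb0).
  - exfalso. specialize (Hlb e0 HM0). simpl in Hlb. exact Hlb.
  - exfalso. assert (H : Rbar_le (Finite 0) m_infty).
    { apply Hgr. intros e [He _]. simpl. apply (bc_range ebar d e He). }
    simpl in H. exact H.
Qed.

Definition linform lo hi ebar pit pi0 a b : Prop :=
  forall th e, inI lo hi th -> inI 0 ebar e ->
     pi_diag pit th e = pi0 e - th * (a * e + b).

Lemma key_ineq lo hi ebar pit pi0 a b d s t e :
  linform lo hi ebar pit pi0 a b -> in_D lo hi ebar pit d ->
  inI lo hi s -> inI lo hi t -> belief_compatible ebar d e ->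
  pi_diag pit t e = pi_d ebar pit d t ->
  pi_d ebar pit d t + (t - s) * (a * e + b) <= pi_d ebar pit d s.
Proof.
  intros Hlin HD Hs Ht Hb He.
  destruct (V_props lo hi ebar pit d s HD Hs) as [Vs _].
  specialize (Vs e Hb).
  assert (E : pi_diag pit s e - pi_diag pit t e = (t - s) * (a * e + b)).
  { rewrite !Hlin; auto; try apply (bc_range ebar d e Hb). ring. }
  lra.
Qed.

Lemma sandwich lo hi ebar pit pi0 a b d s t :
  0 < a -> linform lo hi ebar pit pi0 a b -> in_D lo hi ebar pit d ->
  inI lo hi s -> inI lo hi t -> s <= t ->
  - (t - s) * (a * gamma_d ebar pit d s + b) <= pi_d ebar pit d t - pi_d ebar pit d s <=
  - (t - s) * (a * gamma_d ebar pit d t + b).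
Proof.
  intros Ha Hlin HD Hs Ht Hst.
  split.
  - destruct (Req_dec s t) as [Est|Nst].
    { subst. lra. }
    assert (Hlt : 0 < t - s) by lra.
    destruct (g_props lo hi ebar pit d s HD Hs) as [_ [Hgr _]].
    set (y := ((pi_d ebar pit d s - pi_d ebar pit d t) / (t - s) - b) / a).
    assert (Hy : y <= gamma_d ebar pit d s).
    { apply Hgr. intros e [Hb He].
      pose proof (key_ineq lo hi ebar pit pi0 a b d t s e Hlin HD Ht Hs Hb He) as K.
      unfold y. apply Rmult_le_reg_r with a; auto. unfold Rdiv at 1.
      rewrite Rmult_assoc, Rinv_l, Rmult_1_r by lra.
      apply Rmult_le_reg_r with (t - s); auto.
      replace (((pi_d ebar pit d s - pi_d ebar pit d t) / (t - s) - b) * (t - s))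
        with (pi_d ebar pit d s - pi_d ebar pit d t - b * (t - s)) by (field; lra).
      nra. }
    unfold y in Hy.
    assert (H1 : (pi_d ebar pit d s - pi_d ebar pit d t) / (t - s) - b <= a * gamma_d ebar pit d s).
    { apply Rmult_le_reg_r with (/ a). apply Rinv_0_lt_compat; auto.
      rewrite (Rmult_comm a), Rmult_assoc, Rinv_r, Rmult_1_r by lra. exact Hy. }
    assert (H2 : (pi_d ebar pit d s - pi_d ebar pit d t) <= (t - s) * (a * gamma_d ebar pit d s + b)).
    { replace (pi_d ebar pit d s - pi_d ebar pit d t) with ((t - s) * ((pi_d ebar pit d s - pi_d ebar pit d t) / (t - s))) by (field; lra).
      apply Rmult_le_compat_l; lra. }
    lra.
  - destruct (V_props lo hi ebar pit d t HD Ht) as [_ [e [Hb He]]].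
    destruct (g_props lo hi ebar pit d t HD Ht) as [Hlow _].
    assert (Hge : gamma_d ebar pit d t <= e) by (apply Hlow; split; auto).
    pose proof (key_ineq lo hi ebar pit pi0 a b d s t e Hlin HD Hs Ht Hb He) as K.
    assert ((t - s) * (a * gamma_d ebar pit d t) <= (t - s) * (a * e)).
    { apply Rmult_le_compat_l. lra. apply Rmult_le_compat_l; lra. }
    lra.
Qed.

Lemma g_mono lo hi ebar pit pi0 a b d s t :
  0 < a -> linform lo hi ebar pit pi0 a b -> in_D lo hi ebar pit d ->
  inI lo hi s -> inI lo hi t -> s <= t ->
  gamma_d ebar pit d t <= gamma_d ebar pit d s.
Proof.
  intros Ha Hlin HD Hs Ht Hst.
  destruct (Req_dec s t) as [->|N]; [lra|].
  pose proof (sandwich lo hi ebar pit pi0 a b d s t Ha Hlin HD Hs Ht Hst) as [A B].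
  assert (H : (t - s) * (a * gamma_d ebar pit d t) <= (t - s) * (a * gamma_d ebar pit d s)) by lra.
  apply Rmult_le_reg_l in H; [|lra]. apply Rmult_le_reg_l in H; lra.
Qed.

Lemma V_lip lo hi ebar pit pi0 a b d s t :
  0 < a -> linform lo hi ebar pit pi0 a b -> in_D lo hi ebar pit d ->
  inI lo hi s -> inI lo hi t ->
  Rabs (pi_d ebar pit d t - pi_d ebar pit d s) <= (a * ebar + Rabs b) * Rabs (t - s).
Proof.
  intros Ha Hlin HD Hs Ht.
  destruct (g_props lo hi ebar pit d s HD Hs) as [_ [_ Gs]].
  destruct (g_props lo hi ebar pit d t HD Ht) as [_ [_ Gt]].
  assert (Hb : - Rabs b <= b <= Rabs b) by (split_Rabs; lra).
  destruct (Rle_or_lt s t) as [Hst|Hts].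
  - pose proof (sandwich lo hi ebar pit pi0 a b d s t Ha Hlin HD Hs Ht Hst) as [A B].
    rewrite (Rabs_right (t - s)) by lra.
    assert (0 <= (t - s) * (a * gamma_d ebar pit d t)) by (apply Rmult_le_pos; [lra|apply Rmult_le_pos; lra]).
    assert ((t - s) * (a * gamma_d ebar pit d s) <= (t - s) * (a * ebar)) by (apply Rmult_le_compat_l; [lra|apply Rmult_le_compat_l; lra]).
    assert ((t - s) * b <= (t - s) * Rabs b) by (apply Rmult_le_compat_l; lra).
    assert (- ((t - s) * Rabs b) <= (t - s) * b) by (rewrite Ropp_mult_distr_r; apply Rmult_le_compat_l; lra).
    apply Rabs_le. split; nra.
  - pose proof (sandwich lo hi ebar pit pi0 a b d t s Ha Hlin HD Ht Hs ltac:(lra)) as [A B].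
    rewrite (Rabs_left (t - s)) by lra.
    assert (0 <= (s - t) * (a * gamma_d ebar pit d s)) by (apply Rmult_le_pos; [lra|apply Rmult_le_pos; lra]).
    assert ((s - t) * (a * gamma_d ebar pit d t) <= (s - t) * (a * ebar)) by (apply Rmult_le_compat_l; [lra|apply Rmult_le_compat_l; lra]).
    assert ((s - t) * b <= (s - t) * Rabs b) by (apply Rmult_le_compat_l; lra).
    assert (- ((s - t) * Rabs b) <= (s - t) * b) by (rewrite Ropp_mult_distr_r; apply Rmult_le_compat_l; lra).
    apply Rabs_le. split; nra.
Qed.

Lemma elow_V lo hi ebar pit d th : 0 <= ebar -> in_D lo hi ebar pit d -> inI lo hi th ->
  is_elow ebar pit th ebar ->
  pi_d ebar pit d th = pi_diag pit th ebar /\ gamma_d ebar pit d th = ebar.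
Proof.
  intros He HD Hth [_ [_ Hmin]].
  destruct (V_props lo hi ebar pit d th HD Hth) as [Vub [e [Hb Hev]]].
  pose proof (Vub ebar (bc_top ebar d He)) as Vt.
  assert (Hee : e = ebar).
  { pose proof (bc_range ebar d e Hb). assert (ebar <= e) by (apply Hmin; [auto|lra]). lra. }
  subst e. split; [lra|].
  destruct (g_props lo hi ebar pit d th HD Hth) as [_ [Hgr [_ G2]]].
  assert (ebar <= gamma_d ebar pit d th).
  { apply Hgr. intros e [Hb' He']. apply Hmin. apply (bc_range ebar d e Hb'). lra. }
  lra.
Qed.

Lemma fd_in_D lo hi ebar pit dF : lo <= hi -> 0 <= ebar ->
  (forall th, inI lo hi th -> exists e, is_ehat ebar pit th e) ->
  full_disclosure lo hi ebar pit dF ->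
  in_D lo hi ebar pit dF /\
  (forall th e, inI lo hi th -> inI 0 ebar e -> pi_diag pit th e <= pi_d ebar pit dF th).
Proof.
  intros Hlh He Hex [Hpol Hfd].
  assert (HD : in_D lo hi ebar pit dF).
  { split; auto. intros th Hth. destruct (Hex th Hth) as [e [He1 He2]].
    exists e. split.
    - split; auto. intros e' He' Hd. rewrite (Hfd th e Hth (conj He1 He2) e' He' Hd). lra.
    - intros e' [He' _]. apply He2; auto. }
  split; auto. intros th e Hth He'.
  destruct (Hex th Hth) as [eh [Heh1 Heh2]].
  destruct (V_props lo hi ebar pit dF th HD Hth) as [Vub _].
  apply Rle_trans with (pi_diag pit th eh). apply Heh2; auto.
  apply Vub. split; auto. intros e' He'' Hd. rewrite (Hfd th eh Hth (conj Heh1 Heh2) e' He'' Hd). lra.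
Qed.

Lemma RInt_extR (f g : R -> R) a b :
  (forall x, Rmin a b < x < Rmax a b -> f x = g x) -> RInt f a b = RInt g a b.
Proof. exact (RInt_ext f g a b). Qed.

Lemma ehat_exists ebar pit th : 0 <= ebar ->
  rel_cont (fun e => pi_diag pit th e) 0 ebar -> exists e, is_ehat ebar pit th e.
Proof.
  intros He Hc.
  destruct (continuity_ab_maj (fun e => pi_diag pit th (clamp 0 ebar e)) 0 ebar He) as [Mx [HM HMx]].
  { intros c _. apply continuity_pt_filterlim. apply (cont_clamp (fun e => pi_diag pit th e) 0 ebar He Hc). }
  exists Mx. split. exact HMx.
  intros e' He'. specialize (HM e' He'). rewrite !clamp_id in HM; auto.
Qed.

Lemma f_bound lo hi f : lo <= hi -> rel_cont f lo hi ->
  exists B, forall x, Rabs (f (clamp lo hi x)) <= B.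
Proof.
  intros Hlh Hf.
  assert (Hex : ex_RInt (fun x => f (clamp lo hi x)) lo hi).
  { apply ex_RInt_contR. apply cont_clamp; auto. }
  destruct (ex_RInt_ub _ lo hi Hex) as [M HM].
  exists M. intros x.
  pose proof (clamp_in lo hi x Hlh) as Hc.
  rewrite <- (clamp_id lo hi (clamp lo hi x)) by auto.
  apply (HM (clamp lo hi x)). rewrite Rmin_left, Rmax_right by lra. auto.
Qed.

Lemma integrability lo hi ebar pit f pi0 a b d :
  lo < hi -> 0 < ebar -> 0 < a -> linform lo hi ebar pit pi0 a b -> rel_cont f lo hi ->
  in_D lo hi ebar pit d ->
  ex_RInt (fun th => gamma_d ebar pit d th) lo hi /\
  ex_RInt (fun th => gamma_d ebar pit d th * f th) lo hi /\
  ex_RInt (fun th => pi_d ebar pit d th * f th) lo hi.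
Proof.
  intros Hlh He Ha Hlin Hf HD.
  assert (Hlh' : lo <= hi) by lra.
  set (gc := fun x => gamma_d ebar pit d (clamp lo hi x)).
  assert (Hgc : forall x y, x <= y -> gc y <= gc x).
  { intros x y Hxy. unfold gc. apply (g_mono lo hi ebar pit pi0 a b d); auto;
    try apply clamp_in; auto. apply clamp_mono; auto. }
  assert (Hgr : forall x, 0 <= gc x <= ebar).
  { intros x. unfold gc. destruct (g_props lo hi ebar pit d (clamp lo hi x) HD (clamp_in lo hi x Hlh')) as [_ [_ H]]. exact H. }
  destruct (f_bound lo hi f Hlh' Hf) as [Bf HBf].
  assert (Hfc : forall z, continuous (fun x => f (clamp lo hi x)) z) by (apply cont_clamp; auto).
  split; [|split].
  - assert (H := mono_int lo hi 0 ebar 1 gc (fun _ => 1) Hlh' Hgc Hgr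
             (fun z => continuous_const 1 z) ltac:(intros; simpl; rewrite Rabs_R1; lra)).
    apply ext_open with (fun x => gc x * 1); auto.
    intros x Hx. unfold gc. rewrite clamp_id by lra. ring.
  - assert (H := mono_int lo hi 0 ebar Bf gc (fun x => f (clamp lo hi x)) Hlh' Hgc Hgr Hfc HBf).
    apply ext_open with (fun x => gc x * f (clamp lo hi x)); auto.
    intros x Hx. unfold gc. rewrite clamp_id by lra. ring.
  - assert (HV : rel_cont (fun th => pi_d ebar pit d th) lo hi).
    { intros x Hx eps Heps. set (K := a * ebar + Rabs b + 1).
      assert (HK : 0 < K) by (unfold K; pose proof (Rabs_pos b); nra).
      exists (eps / K). split. apply Rdiv_lt_0_compat; auto.
      intros y Hy Hyx.
      eapply Rle_lt_trans. apply (V_lip lo hi ebar pit pi0 a b d x y); auto.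
      apply Rle_lt_trans with (K * Rabs (y - x)).
      apply Rmult_le_compat_r. apply Rabs_pos. unfold K; lra.
      apply Rmult_lt_reg_r with (/ K). apply Rinv_0_lt_compat; auto.
      replace (K * Rabs (y - x) * / K) with (Rabs (y - x)) by (field; lra).
      exact Hyx. }
    assert (HVc := cont_clamp _ lo hi Hlh' HV).
    assert (H : ex_RInt (fun x => pi_d ebar pit d (clamp lo hi x) * f (clamp lo hi x)) lo hi).
    { apply ex_RInt_contR. intros z. exact (continuous_mult _ _ z (HVc z) (Hfc z)). }
    apply ext_open with (fun x => pi_d ebar pit d (clamp lo hi x) * f (clamp lo hi x)); auto.
    intros x Hx. rewrite clamp_id by lra. ring.
Qed.

Lemma core lo hi ebar pit f pi0 a b thT dF :
  lo < hi -> 0 < ebar ->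
  (forall th, inI lo hi th -> rel_cont (fun e => pi_diag pit th e) 0 ebar) ->
  (forall th, inI lo hi th -> 0 <= f th) -> rel_cont f lo hi ->
  linform lo hi ebar pit pi0 a b -> inI lo hi thT -> 0 < a ->
  (forall th, lo <= th <= thT -> is_elow ebar pit th ebar) ->
  (forall x y, thT <= x -> x <= y -> y <= hi -> f y <= f x) ->
  full_disclosure lo hi ebar pit dF ->
  in_D lo hi ebar pit dF /\
  forall d, in_D lo hi ebar pit d ->
    ex_RInt (fun th => pi_d ebar pit d th * f th) lo hi /\
    ex_RInt (fun th => gamma_d ebar pit d th * f th) lo hi /\
    Pi lo hi ebar pit f d <= Pi lo hi ebar pit f dF /\
    Gamma lo hi ebar pit f dF <= Gamma lo hi ebar pit f d.
Proof.
  intros Hlh He Hc Hf0 Hf Hlin HT Ha Hlow Hfm Hfd.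
  assert (Hlh' : lo <= hi) by lra.
  destruct (fd_in_D lo hi ebar pit dF Hlh' ltac:(lra)
     (fun th Hth => ehat_exists ebar pit th ltac:(lra) (Hc th Hth)) Hfd) as [HDF HVF].
  split; auto.
  intros d HD.
  destruct (integrability lo hi ebar pit f pi0 a b d Hlh He Ha Hlin Hf HD) as [Ig [Igf IVf]].
  destruct (integrability lo hi ebar pit f pi0 a b dF Hlh He Ha Hlin Hf HDF) as [IgF [IgFf IVFf]].
  split; auto. split; auto. split.
  - unfold Pi. apply RInt_le; auto. intros x Hx.
    assert (Hx' : inI lo hi x) by (unfold inI; lra).
    apply Rmult_le_compat_r. apply Hf0; auto.
    destruct (V_props lo hi ebar pit d x HD Hx') as [_ [e [Hb He']]].
    rewrite <- He'. apply HVF; auto. apply (bc_range ebar d e Hb).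
  - set (g := gamma_d ebar pit d). set (gF := gamma_d ebar pit dF).
    set (V := pi_d ebar pit d). set (VF := pi_d ebar pit dF).
    set (phi := fun x => g x - gF x).
    set (ft := fun x => f (Rmax x thT)).
    assert (HlT : lo <= thT /\ thT <= hi) by exact HT.
    assert (Eq0 : forall x, lo <= x <= thT -> g x = ebar /\ gF x = ebar /\ V x = VF x).
    { intros x Hx. assert (Hx' : inI lo hi x) by (unfold inI; lra).
      destruct (elow_V lo hi ebar pit d x ltac:(lra) HD Hx' (Hlow x Hx)) as [A1 A2].
      destruct (elow_V lo hi ebar pit dF x ltac:(lra) HDF Hx' (Hlow x Hx)) as [B1 B2].
      unfold g, gF, V, VF. repeat split; auto. rewrite A1, B1. reflexivity. }
    assert (Iphi : ex_RInt phi lo hi) by (apply ex_RInt_minusR; auto).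
    assert (Iphif : ex_RInt (fun x => phi x * ft x) lo hi).
    { apply ext_open with (fun x => g x * f x - gF x * f x); auto.
      - intros x Hx. unfold phi, ft. destruct (Rle_or_lt thT x) as [H|H].
        + rewrite Rmax_left by lra. ring.
        + destruct (Eq0 x ltac:(lra)) as [A [B _]]. rewrite A, B. ring.
      - apply ex_RInt_minusR; auto. }
    assert (Env : forall c, lo <= c <= hi -> forall dd, in_D lo hi ebar pit dd ->
       ex_RInt (gamma_d ebar pit dd) lo hi ->
       a * RInt (gamma_d ebar pit dd) lo c = pi_d ebar pit dd lo - pi_d ebar pit dd c - b * (c - lo)).
    { intros c Hc' dd HDD Idd. apply envelope; try lra.
      - intros u w H1 H2 H3. apply (g_mono lo hi ebar pit pi0 a b dd); auto; unfold inI; lra.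
      - apply ex_sub with lo hi; auto; lra.
      - intros u w H1 H2 H3. apply (sandwich lo hi ebar pit pi0 a b dd); auto; unfold inI; lra. }
    assert (Ab : 0 <= RInt (fun x => phi x * ft x) lo hi).
    { apply abel with ebar; auto; try lra.
      - intros x Hx. assert (Hx' : inI lo hi x) by (unfold inI; lra).
        destruct (g_props lo hi ebar pit d x HD Hx') as [_ [_ G1]].
        destruct (g_props lo hi ebar pit dF x HDF Hx') as [_ [_ G2]].
        unfold phi, g, gF. apply Rabs_le. lra.
      - intros u w H1 H2 H3. unfold ft. apply Hfm.
        apply Rmax_r. apply Rle_max_compat_r; auto. apply Rmax_lub; lra.
      - intros x Hx. unfold ft. apply Hf0. unfold inI.
        split. apply Rle_trans with x; [lra|apply Rmax_l]. apply Rmax_lub; lra.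
      - intros c Hc'.
        assert (E1 := Env c Hc' d HD Ig). assert (E2 := Env c Hc' dF HDF IgF).
        unfold phi. rewrite RInt_minusR by (apply ex_sub with lo hi; auto; lra).
        assert (L0 : V lo = VF lo) by (apply Eq0; lra).
        assert (Hc2 : inI lo hi c) by (unfold inI; lra).
        assert (VVF : V c <= VF c).
        { destruct (V_props lo hi ebar pit d c HD Hc2) as [_ [e [Hb He']]].
          unfold V, VF. rewrite <- He'. apply HVF; auto. apply (bc_range ebar d e Hb). }
        fold g gF V VF in E1, E2.
        assert (a * (RInt g lo c - RInt gF lo c) >= 0) by lra.
        destruct (Rle_or_lt 0 (RInt g lo c - RInt gF lo c)) as [P|P]; auto. nra. }
    unfold Gamma. fold g gF.
    assert (E : RInt (fun x => phi x * ft x) lo hi = RInt (fun th => g th * f th) lo hi - RInt (fun th => gF th * f th) lo hi).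
    { rewrite <- RInt_minusR by auto. apply RInt_extR.
      rewrite Rmin_left, Rmax_right by lra.
      intros x Hx. unfold phi, ft. destruct (Rle_or_lt thT x) as [H|H].
      + rewrite Rmax_left by lra. ring.
      + destruct (Eq0 x ltac:(lra)) as [A [B _]]. rewrite A, B. ring. }
    lra.
Qed.

Lemma ex_refl (F : R -> R) lo hi : ex_RInt (fun y => F (- y)) (- hi) (- lo) -> ex_RInt F lo hi.
Proof.
  intros H.
  assert (H1 : ex_RInt (fun y => F (- y)) (-1 * lo + 0) (-1 * hi + 0)).
  { replace (-1 * lo + 0) with (- lo) by ring. replace (-1 * hi + 0) with (- hi) by ring.
    apply ex_RInt_swap; exact H. }
  pose proof (ex_RInt_comp_lin (fun y => F (- y)) (-1) 0 lo hi H1) as H2.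
  pose proof (ex_RInt_scalR _ lo hi (-1) H2) as H3.
  apply ex_RInt_ext with (2 := H3). intros x _. simpl. unfold scal; simpl; unfold mult; simpl.
  replace (- (-1 * x + 0)) with x by ring. ring.
Qed.

Lemma RInt_refl (F : R -> R) lo hi : ex_RInt (fun y => F (- y)) (- hi) (- lo) ->
  RInt (fun y => F (- y)) (- hi) (- lo) = RInt F lo hi.
Proof.
  intros H. pose proof (ex_refl F lo hi H) as HF.
  assert (HF' : ex_RInt F (-1 * (- hi) + 0) (-1 * (- lo) + 0)).
  { replace (-1 * (- hi) + 0) with hi by ring. replace (-1 * (- lo) + 0) with lo by ring.
    apply ex_RInt_swap; exact HF. }
  pose proof (RInt_comp_lin F (-1) 0 (- hi) (- lo) HF') as E.
  replace (-1 * (- hi) + 0) with hi in E by ring. replace (-1 * (- lo) + 0) with lo in E by ring.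
  assert (E2 : RInt (fun y => scal (-1) (F (-1 * y + 0))) (- hi) (- lo) = -1 * RInt (fun y => F (- y)) (- hi) (- lo)).
  { rewrite <- RInt_scalR by exact H. apply RInt_extR. intros x _. unfold scal; simpl; unfold mult; simpl.
    replace (-1 * x + 0) with (- x) by ring. ring. }
  assert (E' : -1 * RInt (fun y => F (- y)) (- hi) (- lo) = RInt F hi lo) by (rewrite <- E2; exact E).
  assert (E3 : RInt F hi lo = - RInt F lo hi).
  { rewrite <- (opp_RInt_swap F lo hi HF). reflexivity. }
  rewrite E3 in E'. lra.
Qed.

Lemma finish lo hi ebar pit f dF :
  in_D lo hi ebar pit dF ->
  (forall d, in_D lo hi ebar pit d ->
     Pi lo hi ebar pit f d <= Pi lo hi ebar pit f dF /\
     Gamma lo hi ebar pit f dF <= Gamma lo hi ebar pit f d) ->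
  pareto_efficient lo hi ebar pit f dF /\
  (forall d, pareto_efficient lo hi ebar pit f d ->
     Gamma lo hi ebar pit f d = Gamma lo hi ebar pit f dF /\
     Pi lo hi ebar pit f d = Pi lo hi ebar pit f dF).
Proof.
  intros HDF Hall. split.
  - split; auto. intros [d' [HD' [A [B [C|C]]]]]; destruct (Hall d' HD') as [P Q]; lra.
  - intros d [HD Hn]. destruct (Hall d HD) as [P Q].
    destruct (Req_dec (Gamma lo hi ebar pit f d) (Gamma lo hi ebar pit f dF)) as [E1|E1].
    + destruct (Req_dec (Pi lo hi ebar pit f d) (Pi lo hi ebar pit f dF)) as [E2|E2]; auto.
      exfalso; apply Hn; exists dF; split; [auto|split; [lra|split; [lra|left; lra]]].
    + exfalso; apply Hn; exists dF; split; [auto|split; [lra|split; [lra|right; lra]]].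
Qed.

Definition reflp (pit : R -> R -> R -> R) : R -> R -> R -> R := fun th e e' => pit (- th) e e'.

Lemma in_D_refl1 lo hi ebar pit d : in_D lo hi ebar pit d -> in_D (- hi) (- lo) ebar (reflp pit) d.
Proof.
  intros [Hp HD]. split; auto. intros th Hth.
  destruct (HD (- th) ltac:(unfold inI in *; lra)) as [e [Hb Hm]]. exists e. split; auto.
Qed.

Lemma in_D_refl2 lo hi ebar pit d : in_D (- hi) (- lo) ebar (reflp pit) d -> in_D lo hi ebar pit d.
Proof.
  intros [Hp HD]. split; auto. intros th Hth.
  destruct (HD (- th) ltac:(unfold inI in *; lra)) as [e [Hb Hm]]. exists e. split; auto.
  intros e' He'. specialize (Hm e' He'). unfold pi_diag, reflp in Hm. rewrite Ropp_involutive in Hm. exact Hm.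
Qed.

Lemma fd_refl lo hi ebar pit dF : full_disclosure lo hi ebar pit dF ->
  full_disclosure (- hi) (- lo) ebar (reflp pit) dF.
Proof.
  intros [Hp Hfd]. split; auto. intros th e Hth He. apply (Hfd (- th)); auto. unfold inI in *; lra.
Qed.

Lemma sa_cont lo hi ebar pit : standing_assumptions lo hi ebar pit ->
  forall th, inI lo hi th -> rel_cont (fun e => pi_diag pit th e) 0 ebar.
Proof.
  intros [Hc _] th Hth x Hx eps Heps.
  destruct (Hc th x x Hth Hx Hx eps Heps) as [del [Hdel Hd]].
  exists del. split; auto. intros y Hy Hyx. unfold pi_diag.
  apply Hd; auto. rewrite Rminus_diag, Rabs_R0; auto.
Qed.

Lemma Pi_refl lo hi ebar pit f d :
  ex_RInt (fun th => pi_d ebar (reflp pit) d th * f (- th)) (- hi) (- lo) ->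
  Pi (- hi) (- lo) ebar (reflp pit) (fun th => f (- th)) d = Pi lo hi ebar pit f d.
Proof.
  intros H. unfold Pi. exact (RInt_refl (fun y => pi_d ebar pit d y * f y) lo hi H).
Qed.

Lemma Gamma_refl lo hi ebar pit f d :
  ex_RInt (fun th => gamma_d ebar (reflp pit) d th * f (- th)) (- hi) (- lo) ->
  Gamma (- hi) (- lo) ebar (reflp pit) (fun th => f (- th)) d = Gamma lo hi ebar pit f d.
Proof.
  intros H. unfold Gamma. exact (RInt_refl (fun y => gamma_d ebar pit d y * f y) lo hi H).
Qed.

Theorem proposition6 (lo hi ebar : R) (pit : R -> R -> R -> R) (f : R -> R)
  (pi0 : R -> R) (a b thT : R) :
  lo < hi -> 0 < ebar ->
  standing_assumptions lo hi ebar pit ->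
  density lo hi f ->
  (forall th, lo < th < hi -> ex_derive f th /\ continuous (Derive f) th) ->
  (forall th e, inI lo hi th -> inI 0 ebar e ->
     pi_diag pit th e = pi0 e - th * (a * e + b)) ->
  inI lo hi thT ->
  ((0 < a /\
    (forall th, lo <= th <= thT -> is_elow ebar pit th ebar) /\
    (forall x y, thT <= x -> x <= y -> y <= hi -> f y <= f x))
   \/
   (a < 0 /\
    (forall th, thT <= th <= hi -> is_elow ebar pit th ebar) /\
    (forall x y, lo <= x -> x <= y -> y <= thT -> f x <= f y))) ->
  forall dF, full_disclosure lo hi ebar pit dF ->
    pareto_efficient lo hi ebar pit f dF /\
    (forall d, pareto_efficient lo hi ebar pit f d ->
       Gamma lo hi ebar pit f d = Gamma lo hi ebar pit f dF /\
       Pi lo hi ebar pit f d = Pi lo hi ebar pit f dF).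
Proof.
  intros Hlh He Hsa [Hf0 [Hfc _]] _ Hlin HT Hcase dF Hfd.
  pose proof (sa_cont lo hi ebar pit Hsa) as Hc.
  destruct Hcase as [[Ha [Hlow Hfm]]|[Ha [Hlow Hfm]]].
  - destruct (core lo hi ebar pit f pi0 a b thT dF Hlh He Hc Hf0 Hfc Hlin HT Ha Hlow Hfm Hfd)
      as [HDF Hall].
    apply finish; auto. intros d HD. destruct (Hall d HD) as [_ [_ [P Q]]]. auto.
  - assert (Hc' : forall th, inI (- hi) (- lo) th ->
               rel_cont (fun e => pi_diag (reflp pit) th e) 0 ebar).
    { intros th Hth. apply (Hc (- th)). unfold inI in *; lra. }
    assert (Hf0' : forall th, inI (- hi) (- lo) th -> 0 <= f (- th)).
    { intros th Hth. apply Hf0. unfold inI in *; lra. }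
    assert (Hfc' : rel_cont (fun th => f (- th)) (- hi) (- lo)).
    { intros x Hx eps Heps. destruct (Hfc (- x) ltac:(unfold inI; lra) eps Heps) as [del [Hd Hdd]].
      exists del. split; auto. intros y Hy Hyx. apply Hdd. unfold inI; lra.
      replace (- y - - x) with (- (y - x)) by ring. rewrite Rabs_Ropp. auto. }
    assert (Hlin' : linform (- hi) (- lo) ebar (reflp pit) pi0 (- a) (- b)).
    { intros th e Hth Hee. unfold pi_diag, reflp. 
      change (pit (- th) e e) with (pi_diag pit (- th) e). rewrite Hlin; auto; [ring|unfold inI in *; lra]. }
    assert (HT' : inI (- hi) (- lo) (- thT)) by (unfold inI in *; lra).
    assert (Hlow' : forall th, - hi <= th <= - thT -> is_elow ebar (reflp pit) th ebar).
    { intros th Hth. exact (Hlow (- th) ltac:(lra)). }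
    assert (Hfm' : forall x y, - thT <= x -> x <= y -> y <= - lo -> f (- y) <= f (- x)).
    { intros x y H1 H2 H3. apply Hfm; lra. }
    destruct (core (- hi) (- lo) ebar (reflp pit) (fun th => f (- th)) pi0 (- a) (- b) (- thT) dF
                ltac:(lra) He Hc' Hf0' Hfc' Hlin' HT' ltac:(lra) Hlow' Hfm' (fd_refl _ _ _ _ _ Hfd))
      as [HDF' Hall].
    apply finish. apply (in_D_refl2 _ _ _ _ _ HDF').
    intros d HD.
    destruct (Hall d (in_D_refl1 _ _ _ _ _ HD)) as [E1 [E2 [P Q]]].
    destruct (Hall dF HDF') as [F1 [F2 _]].
    rewrite !Pi_refl in P by auto. rewrite !Gamma_refl in Q by auto. auto.
Qed.
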